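(* Let $\{G(n)\}$ be a sequence of random intersection graphs with $\mathbb E\,Y(n)^2=O(1)$, and let $R(n)$ be the number of $4$-sets $S\subseteq V(G(n))$ that witness a rainbow $K_4$ in $G(n)$. Then $\mathbb E\,R(n)\le(\mathbb E\,Y(n)^2)^4/4!=O(1)$. Furthermore, if for some positive sequence $\varepsilon_n\to0$ we have $n\,\mathbb P(Y(n)\ge\varepsilon_n n^{1/2})\to0$, then with probability tending to $1$, $G(n)$ contains no rainbow $K_4$.
   Context: Random intersection graph: given positive integers $n,m$ and a probability measure $P$ on $\{0,\dots,m\}$, $G(n,m,P)$ has vertex set $V=[n]$ and attribute set $W=\{w_1,\dots,w_m\}$; independent random subsets $S_1,\dots,S_n\subseteq W$ with $\mathbb P(S_v=S)=P(|S|)/\binom{m}{|S|}$; distinct $u,v$ adjacent iff $S_u\cap S_v\ne\emptyset$. For a sequence $G(n)=G(n,m(n),P(n))$ with $m(n)\to\infty$, $X(n)$ has law $P(n)$ and $Y(n)=(n/m)^{1/2}X(n)$. A set $S\subseteq V$ witnesses a rainbow clique if $S$ induces a clique and one can assign to each pair $\{u,v\}\subseteq S$ an attribute in $S_u\cap S_v$ so that all assigned attributes are distinct; $G(n)$ contains a rainbow $K_4$ if some $4$-set is such a witness. *)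

(* Defs.v *)
From Stdlib Require Import Reals.
From mathcomp Require Import all_boot.

Set Implicit Arguments.
Unset Strict Implicit.
Unset Printing Implicit Defensive.

Local Open Scope R_scope.

(* A configuration of the random intersection graph G(n,m,P):
   vertex v in [n] = 'I_n gets the attribute set S_v, a subset of W = 'I_m. *)
Definition config (n m : nat) := {ffun 'I_n -> {set 'I_m}}.

Definition is_distr (m : nat) (P : nat -> R) : Prop :=
  (forall k, (k <= m)%N -> Rle 0 (P k)) /\
  \big[Rplus/0]_(0 <= k < m.+1) P k = 1.

(* Probability of a configuration: independent S_v with
   P(S_v = S) = P(|S|) / binom(m,|S|). *)
Definition cfg_weight (n m : nat) (P : nat -> R) (w : config n m) : R :=
  \big[Rmult/1]_(v : 'I_n) (P #|w v| / INR 'C(m, #|w v|)).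

Definition adj (n m : nat) (w : config n m) (u v : 'I_n) : bool :=
  (u != v) && (w u :&: w v != set0).

Definition rainbow_K4_witness (n m : nat) (w : config n m) (S : {set 'I_n}) : bool :=
  [&& #|S| == 4%N,
      [forall u in S, forall v in S, (u != v) ==> adj w u v] &
      [exists g : {ffun 'I_n * 'I_n -> 'I_m},
         [forall u in S, forall v in S, (u != v) ==>
            [&& g (u, v) == g (v, u),
                g (u, v) \in w u :&: w v &
                [forall u' in S, forall v' in S, (u' != v') ==>
                   (g (u, v) == g (u', v')) ==> ([set u; v] == [set u'; v'])]]]]].

Definition num_rainbow_K4 (n m : nat) (w : config n m) : nat :=
  #|[set S : {set 'I_n} | rainbow_K4_witness w S]|.

Definition has_rainbow_K4 (n m : nat) (w : config n m) : bool :=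
  [exists S : {set 'I_n}, rainbow_K4_witness w S].

Definition E_num_rainbow_K4 (n m : nat) (P : nat -> R) : R :=
  \big[Rplus/0]_(w : config n m) (cfg_weight P w * INR (num_rainbow_K4 w)).

Definition Pr_no_rainbow_K4 (n m : nat) (P : nat -> R) : R :=
  \big[Rplus/0]_(w : config n m)
     (if has_rainbow_K4 w then 0 else cfg_weight P w).

Definition Yval (n m k : nat) : R := (sqrt (INR n / INR m) * INR k).

Definition EY2 (n m : nat) (P : nat -> R) : R :=
  \big[Rplus/0]_(0 <= k < m.+1) (P k * (Yval n m k) ^ 2).

Definition PrY_ge (n m : nat) (P : nat -> R) (t : R) : R :=
  \big[Rplus/0]_(0 <= k < m.+1) (if Rle_dec t (Yval n m k) then P k else 0).

(* Main.v *)
Require Import Defs.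
From Stdlib Require Import Reals Lra Lia.
From mathcomp Require Import all_boot.
From HB Require Import structures.
Set Implicit Arguments.
Unset Strict Implicit.
Local Open Scope R_scope.

HB.instance Definition _ := Monoid.isComLaw.Build R 0 Rplus (fun a b c => esym (Rplus_assoc a b c)) Rplus_comm Rplus_0_l.
HB.instance Definition _ := Monoid.isComLaw.Build R 1 Rmult (fun a b c => esym (Rmult_assoc a b c)) Rmult_comm Rmult_1_l.
HB.instance Definition _ := Monoid.isMulLaw.Build R 0 Rmult Rmult_0_l Rmult_0_r.
HB.instance Definition _ := Monoid.isAddLaw.Build R Rmult Rplus Rmult_plus_distr_r Rmult_plus_distr_l.

Definition ind (b : bool) : R := if b then 1 else 0.
Lemma ind_ge0 b : 0 <= ind b. Proof. case: b; rewrite /ind; lra. Qed.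
Lemma ind_le1 b : ind b <= 1. Proof. case: b; rewrite /ind; lra. Qed.

Section Big.
Variable I : finType.
Implicit Types (P : pred I) (F G : I -> R).

Lemma Rsum_le P F G : (forall i, P i -> F i <= G i) ->
  \big[Rplus/0]_(i | P i) F i <= \big[Rplus/0]_(i | P i) G i.
Proof. move=> H; apply: (big_ind2 (fun x y => x <= y)) => //; [lra | move=> *; lra]. Qed.

Lemma Rsum_ge0 P F : (forall i, P i -> 0 <= F i) -> 0 <= \big[Rplus/0]_(i | P i) F i.
Proof. move=> H; apply: (big_ind (fun x => 0 <= x)) => //; [lra | move=> *; lra]. Qed.

Lemma Rprod_ge0 P F : (forall i, P i -> 0 <= F i) -> 0 <= \big[Rmult/1]_(i | P i) F i.
Proof. move=> H; apply: (big_ind (fun x => 0 <= x)) => //; [lra | move=> *; nra]. Qed.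

Lemma Rprod_le P F G : (forall i, P i -> 0 <= F i <= G i) ->
  \big[Rmult/1]_(i | P i) F i <= \big[Rmult/1]_(i | P i) G i.
Proof.
move=> H; suff: 0 <= \big[Rmult/1]_(i | P i) F i <= \big[Rmult/1]_(i | P i) G i by case.
apply: (big_ind2 (fun x y => 0 <= x <= y)) => //; [lra | move=> *; nra].
Qed.

Lemma Rsum_ge_term P F i0 : P i0 -> (forall i, P i -> 0 <= F i) ->
  F i0 <= \big[Rplus/0]_(i | P i) F i.
Proof.
move=> Hi H; rewrite (bigD1 i0) //=.
have : 0 <= \big[Rplus/0]_(i | P i && (i != i0)) F i by apply: Rsum_ge0 => i /andP[/H].
lra.
Qed.

Lemma Rsum_const P c : \big[Rplus/0]_(i | P i) c = INR #|P| * c.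
Proof.
rewrite big_const; elim: #|P| => [|k IH]; first by rewrite /=; lra.
rewrite iterS IH S_INR; lra.
Qed.

Lemma Rprod_const P c : \big[Rmult/1]_(i | P i) c = c ^ #|P|.
Proof. rewrite big_const; elim: #|P| => [|k IH] //; by rewrite iterS IH. Qed.

Lemma INR_sum P (F : I -> nat) : INR (\sum_(i | P i) F i) = \big[Rplus/0]_(i | P i) INR (F i).
Proof. exact: (big_morph INR plus_INR). Qed.

Lemma INR_card P : INR #|P| = \big[Rplus/0]_i ind (P i).
Proof.
rewrite -sum1_card INR_sum big_mkcond /=; apply: eq_bigr => i _.
by rewrite /ind; case: ifP.
Qed.

Lemma Rsum_mull P F c : \big[Rplus/0]_(i | P i) (c * F i) = c * \big[Rplus/0]_(i | P i) F i.
Proof. by rewrite big_distrr. Qed.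

End Big.
Definition fw (m : nat) (P : nat -> R) (A : {set 'I_m}) : R := P #|A| / INR 'C(m, #|A|).

Lemma EXP n m P (F : 'I_n -> {set 'I_m} -> R) :
  \big[Rplus/0]_(w : config n m) (cfg_weight P w * \big[Rmult/1]_v F v (w v)) =
  \big[Rmult/1]_(v : 'I_n) \big[Rplus/0]_(A : {set 'I_m}) (fw P A * F v A).
Proof.
rewrite bigA_distr_bigA; apply: eq_bigr => w _; rewrite /cfg_weight -big_split //.
Qed.

Lemma sum_ind_ord m (G : nat -> R) x : (x <= m)%N ->
  \big[Rplus/0]_(k < m.+1) (G k * ind (x == k)) = G x.
Proof.
move=> Hx; rewrite (bigD1 (inord x)) //= inordK // eqxx /ind Rmult_1_r big1 ?Rplus_0_r //.
move=> k Hk; case: eqP => [E|_]; last by rewrite Rmult_0_r.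
by move: Hk; rewrite -(inj_eq val_inj) /= inordK // E eqxx.
Qed.

Lemma count_k m P k : (k <= m)%N ->
  \big[Rplus/0]_(A : {set 'I_m}) (fw P A * ind (#|A| == k)) = P k.
Proof.
move=> Hk.
rewrite (eq_bigr (fun A : {set 'I_m} => if #|A| == k then P k / INR 'C(m,k) else 0)); last first.
  by move=> A _; rewrite /ind /fw; case: eqP => [->|_]; lra.
rewrite -big_mkcond Rsum_const.
have -> : #|[pred A : {set 'I_m} | #|A| == k]| = 'C(m, k).
  by rewrite -[in RHS](card_ord m) -card_draws cardsE.
have : (0 < 'C(m, k))%N by rewrite bin_gt0.
move/ltP/lt_0_INR => H; field; lra.
Qed.

Lemma sum_card_fun m P (g : nat -> R) :
  \big[Rplus/0]_(A : {set 'I_m}) (fw P A * g #|A|) =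
  \big[Rplus/0]_(k < m.+1) (P k * g k).
Proof.
transitivity (\big[Rplus/0]_(A : {set 'I_m}) \big[Rplus/0]_(k < m.+1) (fw P A * g k * ind (#|A| == k))).
  apply: eq_bigr => A _; rewrite (sum_ind_ord (fun k => fw P A * g k)) //.
  by rewrite -[X in (_ <= X)%N](card_ord m) max_card.
rewrite exchange_big; apply: eq_bigr => k _.
have Hk : (k <= m)%N by rewrite -ltnS.
rewrite -(count_k P Hk) big_distrl /=; apply: eq_bigr => A _; lra.
Qed.

Lemma sum_fw m P : is_distr m P -> \big[Rplus/0]_(A : {set 'I_m}) fw P A = 1.
Proof.
case=> _ H1; rewrite -H1 big_mkord.
have E := sum_card_fun m P (fun _ => 1).
transitivity (\big[Rplus/0]_(A : {set 'I_m}) (fw P A * 1)).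
  by apply: eq_bigr => *; rewrite Rmult_1_r.
by rewrite E; apply: eq_bigr => *; rewrite Rmult_1_r.
Qed.
From mathcomp Require Import zify.

Lemma bin_ineq l j : (j <= l)%N ->
  ('C(l, j) * l.+3^3 <= 'C(l.+3, j.+3) * j.+3^3)%N.
Proof.
move=> Hjl.
have E1 := mul_bin_diag l.+3 j.+2.
have E2 := mul_bin_diag l.+2 j.+1.
have E3 := mul_bin_diag l.+1 j.
simpl in E1, E2, E3.
move: E1 E2 E3.
set x := 'C(l, j); set y := 'C(l.+3, j.+3); set y2 := 'C(l.+2, j.+2); set y1 := 'C(l.+1, j.+1).
move=> E1 E2 E3.
have key : (l.+3*l.+2*l.+1 * x = j.+3*j.+2*j.+1 * y)%N.
  have -> : (l.+3*l.+2*l.+1 * x = l.+3*(l.+2*(l.+1 * x)))%N by lia.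
  rewrite E3. have -> : (l.+2 * (j.+1 * y1) = j.+1 * (l.+2 * y1))%N by lia.
  rewrite E2. have -> : (l.+3 * (j.+1 * (j.+2 * y2)) = j.+1 * j.+2 * (l.+3 * y2))%N by lia.
  rewrite E1; lia.
have h1 : (j.+2*l.+3 <= j.+3*l.+2)%N by nia.
have h2 : (j.+1*l.+3 <= j.+3*l.+1)%N by nia.
have h3 : (j.+2*l.+3*(j.+1*l.+3) <= j.+3*l.+2*(j.+3*l.+1))%N by apply: leq_mul.
have : (l.+2*l.+1 * (x * l.+3^3) <= l.+2*l.+1 * (y * j.+3^3))%N.
  have -> : (l.+2*l.+1 * (x * l.+3^3) = (l.+3*l.+2*l.+1 * x) * l.+3^2)%N by lia.
  rewrite key.
  have -> : (j.+3*j.+2*j.+1 * y * l.+3^2 = j.+3 * y * (j.+2*l.+3*(j.+1*l.+3)))%N by lia.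
  have -> : (l.+2*l.+1 * (y * j.+3^3) = j.+3 * y * (j.+3*l.+2*(j.+3*l.+1)))%N by lia.
  by apply: leq_mul.
by rewrite leq_pmul2l.
Qed.
Lemma super_card m k (T : {set 'I_m}) : #|T| = 3%N -> (k <= m)%N ->
  (#|[set A : {set 'I_m} | (#|A| == k) && (T \subset A)]| * m^3 <= 'C(m, k) * k^3)%N.
Proof.
move=> HT Hkm.
have [Hk3|Hk3] := ltnP k 3.
  rewrite (_ : #|_| = 0%N) // ; apply: eq_card0 => A; rewrite !inE.
  apply/negP => /andP[/eqP HA /subset_leq_card]; rewrite HT HA; lia.
have Hm3 : (3 <= m)%N by lia.
set U := [set B : {set 'I_m} | B \subset ~: T & #|B| == (k - 3)%N].
have cU : #|U| = 'C(m - 3, k - 3).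
  rewrite /U cards_draws; congr 'C(_, _).
  by have := cardsC T; rewrite card_ord HT; lia.
have Himg : [set A : {set 'I_m} | (#|A| == k) && (T \subset A)] = [set B :|: T | B in U].
  apply/setP => A; rewrite !inE; apply/idP/imsetP.
  - case/andP => /eqP HA HTA; exists (A :\: T).
      rewrite inE subsetDr /= cardsD (setIidPr HTA) HA HT //.
    apply/setP => x; rewrite !inE; case: (boolP (x \in T)) => xT /=.
      by rewrite (subsetP HTA).
    by rewrite orbF.
  - case=> B; rewrite inE => /andP[HB /eqP HBk] ->.
    rewrite subsetUr andbT cardsU HBk HT.
    have -> : B :&: T = set0.
      apply/setP => x; rewrite !inE; apply/negP => /andP[xB xT].
      by have := subsetP HB x xB; rewrite inE xT.
    rewrite cards0; apply/eqP; lia.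
have cI : #|[set B :|: T | B in U]| = #|U|.
  apply: card_in_imset => B1 B2; rewrite !inE => /andP[H1 _] /andP[H2 _] E.
  apply/setP => x; move/setP: E => /(_ x); rewrite !inE.
  case: (boolP (x \in T)) => xT; last by rewrite !orbF.
  have n1 : x \notin B1 by apply/negP => /(subsetP H1); rewrite inE xT.
  have n2 : x \notin B2 by apply/negP => /(subsetP H2); rewrite inE xT.
  by rewrite (negbTE n1) (negbTE n2).
rewrite Himg cI cU.
have := @bin_ineq (m - 3) (k - 3) (leq_sub2r 3 Hkm).
have e1 : (m - 3).+3 = m by lia.
have e2 : (k - 3).+3 = k by lia.
by rewrite e1 e2.
Qed.
Lemma INR_muln a b : INR (a * b)%N = INR a * INR b.
Proof. by rewrite mulnE mult_INR. Qed.
Lemma INR_expn a k : INR (a ^ k)%N = INR a ^ k.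
Proof. elim: k => [|k IH]; first by rewrite expn0. by rewrite expnS INR_muln IH. Qed.
Lemma INR_addn a b : INR (a + b)%N = INR a + INR b.
Proof. by rewrite addnE plus_INR. Qed.

Lemma super_sum m P k (T : {set 'I_m}) : #|T| = 3%N -> (k <= m)%N -> 0 <= P k -> (0 < m)%N ->
  \big[Rplus/0]_(A : {set 'I_m}) (fw P A * (ind (#|A| == k) * ind (T \subset A)))
  <= P k * (INR k / INR m) ^ 3.
Proof.
move=> HT Hkm HP Hm.
rewrite (eq_bigr (fun A : {set 'I_m} => if (#|A| == k) && (T \subset A) then P k / INR 'C(m,k) else 0)); last first.
  by move=> A _; rewrite /ind /fw; case: eqP => [->|_]; case: (T \subset A) => /=; lra.
rewrite -big_mkcond Rsum_const.
have := super_card HT Hkm.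
set c := #|_|.
move/leP/le_INR; rewrite !INR_muln => Hc.
have : (0 < 'C(m, k))%N by rewrite bin_gt0.
move/ltP/lt_0_INR => HC.
have : (0 < m)%N by [].
move/ltP/lt_0_INR => Hm'.
set C := INR 'C(m, k) in HC Hc *. set M := INR m in Hm' Hc *.
have Hc2 : INR c * M^3 <= C * INR k^3 by rewrite /=; lra.
have Hc0 : 0 <= INR c by apply: pos_INR.
have Ec : #|(fun A : {set 'I_m} => (#|A| == k) && (T \subset A))| = c.
  by rewrite /c; apply: eq_card => A; rewrite inE.
rewrite Ec.
have -> : INR c * (P k / C) = (INR c * M^3) * P k / (C * M^3) by field; lra.
have -> : P k * (INR k / M) ^ 3 = (C * INR k^3) * P k / (C * M^3) by field; lra.
apply: Rmult_le_compat_r.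
  by apply: Rlt_le; apply: Rinv_0_lt_compat; apply: Rmult_lt_0_compat => //; apply: pow_lt.
by apply: Rmult_le_compat_r.
Qed.
Section Labels.
Variables (n m : nat).
Implicit Types (S : {set 'I_n}) (w : config n m).

Definition Dp S := [set p : 'I_n * 'I_n | (p.1 \in S) && (p.2 \in S) && (p.1 < p.2)%N].
Definition op (u v : 'I_n) : 'I_n * 'I_n := if (u < v)%N then (u, v) else (v, u).
Definition Tv (L : {ffun 'I_n * 'I_n -> 'I_m}) S v := [set L (op v u) | u in S :\ v].
Definition goodL S (L : {ffun 'I_n * 'I_n -> 'I_m}) := [forall v in S, #|Tv L S v| == 3%N].

Lemma card_Dp S : #|S| = 4%N -> (#|Dp S| <= 6)%N.
Proof.
move=> HS.
have <- : 'C(#|S|, 2) = 6%N by rewrite HS.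
rewrite -cards_draws.
have <- : #|[set [set p.1; p.2] | p in Dp S]| = #|Dp S|.
  apply: card_in_imset => [[a b] [c d]]; rewrite !inE /= => /andP[/andP[_ _] ab] /andP[/andP[_ _] cd] E.
  have ha : a \in [set c; d] by rewrite -E !inE eqxx.
  have hb : b \in [set c; d] by rewrite -E !inE eqxx orbT.
  have hc : c \in [set a; b] by rewrite E !inE eqxx.
  move: ha hb hc; rewrite !inE => /orP[/eqP ea|/eqP ea] /orP[/eqP eb|/eqP eb] /orP[/eqP ec|/eqP ec];
    subst => //; exfalso; rewrite ?ltnn in ab cd; try done; lia.
apply: subset_leq_card; apply/subsetP => B /imsetP[[a b]]; rewrite !inE /= => /andP[/andP[aS bS] ab] ->.
rewrite cards2.
have -> : (a != b) by apply/eqP => E; subst; rewrite ltnn in ab.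
rewrite eqxx andbT; apply/subsetP => x; rewrite !inE => /orP[/eqP->|/eqP->] //.
Qed.

Lemma witness_L (y0 : 'I_m) w S : rainbow_K4_witness w S ->
  exists2 L, L \in pffun_on y0 (Dp S) setT &
    goodL S L && [forall v in S, Tv L S v \subset w v].
Proof.
case/and3P => /eqP HS _ /existsP[g /forall_inP Hg].
have Hg' : forall u v, u \in S -> v \in S -> u != v ->
   [/\ g (u, v) = g (v, u), g (u, v) \in w u :&: w v &
       forall u' v', u' \in S -> v' \in S -> u' != v' -> g (u, v) = g (u', v') ->
           [set u; v] = [set u'; v']].
  move=> u v uS vS uv; have /forall_inP/(_ v vS) := Hg u uS; rewrite uv /=.
  case/and3P => /eqP e1 e2 /forall_inP e3; split => // u' v' u'S v'S u'v' E.
  by have /forall_inP/(_ v' v'S) := e3 u' u'S; rewrite u'v' E eqxx /= => /eqP.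
pose L := [ffun p => if p \in Dp S then g p else y0].
exists L.
  apply/pffun_onP; split; last by move=> *; rewrite inE.
  apply/subsetP => p; rewrite inE ffunE; case: ifP => // _; by rewrite eqxx.
have opE : forall v u, v \in S -> u \in S -> u != v -> L (op v u) = g (v, u).
  move=> v u vS uS uv; rewrite /op ffunE.
  case: ltnP => H.
    by rewrite inE /= vS uS H.
  have H' : (u < v)%N.
    rewrite ltn_neqAle H andbT; apply/negP => /eqP E; move/negP: uv; apply; apply/eqP; exact: val_inj.
  rewrite inE /= vS uS H' /=.
  by case: (Hg' u v uS vS uv).
have TvE : forall v, v \in S -> Tv L S v = [set g (v, u) | u in S :\ v].
  move=> v vS; apply: eq_in_imset => u; rewrite !inE => /andP[uv uS]; exact: opE.
apply/andP; split.
  apply/forall_inP => v vS; rewrite TvE //.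
  rewrite card_in_imset.
    have := cardsD1 v S; rewrite vS HS add1n => -[<-]; done.
  move=> u1 u2; rewrite !inE => /andP[u1v u1S] /andP[u2v u2S] E.
  have vu1 : v != u1 by rewrite eq_sym.
  case: (Hg' v u1 vS u1S vu1) => _ _ /(_ v u2 vS u2S) H.
  have : [set v; u1] = [set v; u2] by apply: H => //; rewrite eq_sym.
  move/setP/(_ u1); rewrite !inE eqxx orbT (negbTE u1v) /= => /esym/eqP; done.
apply/forall_inP => v vS; rewrite TvE //; apply/subsetP => x /imsetP[u]; rewrite !inE => /andP[uv uS] ->.
have vu : v != u by rewrite eq_sym.
by case: (Hg' v u vS uS vu) => _; rewrite inE => /andP[].
Qed.

End Labels.
Section Expect.
Variables (n m : nat) (P : nat -> R).
Hypothesis HP : is_distr m P.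
Implicit Types (S : {set 'I_n}) (w : config n m) (kk : {ffun 'I_n -> 'I_m.+1}).

Lemma P_ge0 k : (k <= m)%N -> 0 <= P k.
Proof. by case: HP => H _ /H. Qed.

Definition Ik S v (k : nat) (A : {set 'I_m}) : R :=
  if v \in S then ind (#|A| == k) else ind (k == 0%N).
Definition Iw S kk w := \big[Rmult/1]_v Ik S v (kk v) (w v).
Definition E0 S kk := \big[Rmult/1]_v (if v \in S then P (kk v) else ind (nat_of_ord (kk v) == 0%N)).

Lemma Ik_ge0 S v k A : 0 <= Ik S v k A.
Proof. rewrite /Ik; case: ifP => _; exact: ind_ge0. Qed.

Lemma Iw_ge0 S kk w : 0 <= Iw S kk w.
Proof. apply: Rprod_ge0 => v _; exact: Ik_ge0. Qed.

Lemma E0_ge0 S kk : 0 <= E0 S kk.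
Proof.
apply: Rprod_ge0 => v _; case: ifP => _; last exact: ind_ge0.
by apply: P_ge0; rewrite -ltnS.
Qed.

Lemma card_le_m (A : {set 'I_m}) : (#|A| <= m)%N.
Proof. by rewrite -[X in (_ <= X)%N](card_ord m) max_card. Qed.

Lemma sum_kk_one S w : \big[Rplus/0]_kk Iw S kk w = 1.
Proof.
transitivity (\big[Rmult/1]_v \big[Rplus/0]_(k : 'I_m.+1) Ik S v k (w v)).
  by rewrite bigA_distr_bigA.
rewrite big1 // => v _; rewrite /Ik; case: (v \in S).
  have := sum_ind_ord (fun _ => 1) (card_le_m (w v)).
  by move=> <-; apply: eq_bigr => k _; rewrite Rmult_1_l.
have := sum_ind_ord (m:=m) (fun _ => 1) (leq0n m).
by move=> <-; apply: eq_bigr => k _; rewrite Rmult_1_l eq_sym.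
Qed.

Lemma sum_wt : \big[Rplus/0]_(w : config n m) cfg_weight P w = 1.
Proof.
have E := EXP P (fun _ _ => 1).
transitivity (\big[Rplus/0]_(w : config n m) (cfg_weight P w * \big[Rmult/1]_(v : 'I_n) 1)).
  by apply: eq_bigr => w _; rewrite big1_eq; lra.
rewrite E big1 // => v _.
by rewrite -[RHS](sum_fw HP); apply: eq_bigr => A _; lra.
Qed.

Lemma fw_ge0 (A : {set 'I_m}) : 0 <= fw P A.
Proof.
rewrite /fw /Rdiv; apply: Rmult_le_pos.
  exact: P_ge0 (card_le_m _).
apply: Rlt_le; apply: Rinv_0_lt_compat; apply: lt_0_INR; apply/ltP.
by rewrite bin_gt0 card_le_m.
Qed.

Lemma wt_ge0 w : 0 <= cfg_weight P w.
Proof. apply: Rprod_ge0 => v _; exact: fw_ge0. Qed.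

Lemma E_Iw S kk : \big[Rplus/0]_w (cfg_weight P w * Iw S kk w) = E0 S kk.
Proof.
rewrite /Iw (EXP P (fun v A => Ik S v (kk v) A)) /E0; apply: eq_bigr => v _; rewrite /Ik; case: ifP => _.
  by apply: count_k; rewrite -ltnS.
by rewrite -big_distrl /= (sum_fw HP); lra.
Qed.

Lemma ind_forall S (b : 'I_n -> bool) :
  ind [forall v in S, b v] = \big[Rmult/1]_v (if v \in S then ind (b v) else 1).
Proof.
case: (boolP [forall v in S, b v]) => [/forall_inP H | /forall_inPn [v vS nb]].
  by rewrite /ind big1 // => v _; case: ifP => // /H ->.
rewrite /ind (bigD1 v) //= vS (negbTE nb) Rmult_0_l //.
Qed.

Lemma prod_split S (a b c : 'I_n -> R) :
  \big[Rmult/1]_v (if v \in S then a v * b v else c v) =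
  \big[Rmult/1]_v (if v \in S then a v else c v) * \big[Rmult/1]_(v in S) b v.
Proof.
rewrite [in RHS](big_mkcond (fun v => v \in S)) -big_split /=; apply: eq_bigr => v _.
by case: ifP => _; lra.
Qed.

Definition M3 S kk := \big[Rmult/1]_v
   (if v \in S then P (kk v) * (INR (kk v) / INR m) ^ 3 else ind (nat_of_ord (kk v) == 0%N)).

Lemma E_L S kk L : (0 < m)%N -> goodL S L ->
  \big[Rplus/0]_w (cfg_weight P w * (Iw S kk w * ind [forall v in S, Tv L S v \subset w v]))
  <= M3 S kk.
Proof.
move=> Hm /forall_inP Hg.
rewrite (eq_bigr (fun w : config n m => cfg_weight P w * \big[Rmult/1]_v
     (Ik S v (kk v) (w v) * (if v \in S then ind (Tv L S v \subset w v) else 1)))); last first.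
  by move=> w _; rewrite ind_forall /Iw -big_split.
rewrite (EXP P (fun v A => Ik S v (kk v) A * (if v \in S then ind (Tv L S v \subset A) else 1))) /M3; apply: Rprod_le => v _; split.
  apply: Rsum_ge0 => A _; apply: Rmult_le_pos; first exact: fw_ge0.
  by apply: Rmult_le_pos; [exact: Ik_ge0| case: ifP => _; [exact: ind_ge0|lra]].
rewrite /Ik; case: ifP => vS.
  apply: super_sum.
  - by apply/eqP; exact: Hg.
  - by rewrite -ltnS.
  - by apply: P_ge0; rewrite -ltnS.
  - exact: Hm.
apply: Req_le.
transitivity (\big[Rplus/0]_(A : {set 'I_m}) (fw P A * ind (nat_of_ord (kk v) == 0%N))).
  by apply: eq_bigr => A _; rewrite Rmult_1_r.
by rewrite -big_distrl /= (sum_fw HP); lra.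
Qed.

Lemma M3_ge0 S kk : 0 <= M3 S kk.
Proof.
apply: Rprod_ge0 => v _; case: ifP => _; last exact: ind_ge0.
apply: Rmult_le_pos; first by apply: P_ge0; rewrite -ltnS.
apply: pow_le; apply: Rmult_le_pos; first exact: pos_INR.
case: (Nat.eq_dec m 0) => [->|H]; first by rewrite /= Rinv_0; lra.
by apply: Rlt_le; apply: Rinv_0_lt_compat; apply: lt_0_INR; lia.
Qed.

Lemma E_wit_kk S kk : (0 < m)%N -> #|S| = 4%N ->
  \big[Rplus/0]_w (cfg_weight P w * (ind (rainbow_K4_witness w S) * Iw S kk w))
  <= INR m ^ 6 * M3 S kk.
Proof.
move=> Hm HS.
pose y0 := Ordinal Hm.
pose Ls := pffun_on y0 (Dp S) setT.
pose F (L : {ffun 'I_n * 'I_n -> 'I_m}) w :=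
  ind (goodL S L) * (Iw S kk w * ind [forall v in S, Tv L S v \subset w v]).
have Fge0 : forall L w, 0 <= F L w.
  move=> L w; apply: Rmult_le_pos; first exact: ind_ge0.
  apply: Rmult_le_pos; [exact: Iw_ge0 | exact: ind_ge0].
have PW : forall w, ind (rainbow_K4_witness w S) * Iw S kk w <= \big[Rplus/0]_(L in Ls) F L w.
  move=> w; case: (boolP (rainbow_K4_witness w S)) => Hw; last first.
    rewrite /ind Rmult_0_l; apply: Rsum_ge0 => L _; exact: Fge0.
  case: (witness_L y0 Hw) => L HL /andP[g1 g2].
  apply: Rle_trans (Rsum_ge_term (P := fun L => L \in Ls) HL (fun L _ => Fge0 L w)).
  by rewrite /F g1 g2 /ind; lra.
apply: (Rle_trans _ (\big[Rplus/0]_w (cfg_weight P w * \big[Rplus/0]_(L in Ls) F L w))).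
  apply: Rsum_le => w _; apply: Rmult_le_compat_l; [exact: wt_ge0 | exact: PW].
rewrite (eq_bigr (fun w => \big[Rplus/0]_(L in Ls) (cfg_weight P w * F L w))); last first.
  by move=> w _; rewrite big_distrr.
rewrite exchange_big /=.
apply: (Rle_trans _ (\big[Rplus/0]_(L in Ls) M3 S kk)).
  apply: Rsum_le => L _.
  rewrite (eq_bigr (fun w => ind (goodL S L) * (cfg_weight P w *
      (Iw S kk w * ind [forall v in S, Tv L S v \subset w v])))); last first.
    by move=> w _; rewrite /F; lra.
  rewrite Rsum_mull; case: (boolP (goodL S L)) => gL.
    by rewrite /ind Rmult_1_l; apply: E_L.
  by rewrite /ind Rmult_0_l; apply: M3_ge0.
rewrite Rsum_const; apply: Rmult_le_compat_r; first exact: M3_ge0.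
have -> : #|[pred L | L \in Ls]| = #|Ls| by [].
rewrite card_pffun_on cardsT card_ord INR_expn.
have Hm1 : 1 <= INR m by apply: (le_INR 1); apply/leP.
have HD := card_Dp HS.
apply: (Rle_trans _ (INR m ^ 6)); last by simpl; lra.
by apply: Rle_pow => //; apply/leP.
Qed.

Definition tk (k : nat) : R := INR k / INR m.
Definition qq : R := \big[Rplus/0]_(k < m.+1) (P k * (INR k ^ 2 / INR m)).
Definition T2 S kk := \big[Rmult/1]_v
   (if v \in S then P (kk v) * (INR (kk v) ^ 2 / INR m) else ind (nat_of_ord (kk v) == 0%N)).
Definition pS S kk := \big[Rmult/1]_(v in S) tk (kk v).

Lemma Rprod_pow S (F : 'I_n -> R) k :
  \big[Rmult/1]_(v in S) (F v ^ k) = (\big[Rmult/1]_(v in S) F v) ^ k.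
Proof.
elim: k => [|k IH] /=; first by rewrite big1.
by rewrite big_split /= IH.
Qed.

Lemma M3E S kk : M3 S kk = E0 S kk * pS S kk ^ 3.
Proof. by rewrite /M3 prod_split -Rprod_pow. Qed.

Lemma T2E S kk : (0 < m)%N -> #|S| = 4%N -> T2 S kk = E0 S kk * (INR m ^ 4 * pS S kk ^ 2).
Proof.
move=> Hm HS.
have Hm' : INR m <> 0 by apply: not_0_INR; lia.
rewrite /T2 prod_split -Rprod_pow; congr (_ * _).
rewrite (eq_bigr (fun v => INR m * tk (kk v) ^ 2)); last by move=> v _; rewrite /tk; field.
rewrite big_split /= Rprod_const.
have -> : #|[pred v | v \in S]| = 4%N by rewrite -HS.
done.
Qed.

Lemma sum_T2 S : #|S| = 4%N -> \big[Rplus/0]_kk T2 S kk = qq ^ 4.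
Proof.
move=> HS.
transitivity (\big[Rmult/1]_v \big[Rplus/0]_(k : 'I_m.+1)
   (if v \in S then P k * (INR k ^ 2 / INR m) else ind (nat_of_ord k == 0%N))).
  by rewrite bigA_distr_bigA.
transitivity (\big[Rmult/1]_v (if v \in S then qq else 1)).
  apply: eq_bigr => v _; case: (v \in S) => //.
  have := sum_ind_ord (m:=m) (fun _ => 1) (leq0n m).
  by move=> <-; apply: eq_bigr => k _; rewrite Rmult_1_l eq_sym.
by rewrite -big_mkcond Rprod_const -HS.
Qed.

Lemma z_ineq x e0 mm p : 0 <= e0 -> 0 <= mm -> 0 <= p -> x <= e0 ->
  x <= mm ^ 6 * (e0 * p ^ 3) -> x <= e0 * (mm ^ 4 * p ^ 2).
Proof.
move=> He Hmm Hp H1 H2.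
set z := mm ^ 2 * p.
have Hz : 0 <= z by apply: Rmult_le_pos => //; apply: pow_le.
have E3 : mm ^ 6 * (e0 * p ^ 3) = e0 * z ^ 3 by rewrite /z; ring.
have E2 : e0 * (mm ^ 4 * p ^ 2) = e0 * z ^ 2 by rewrite /z; ring.
rewrite E2; rewrite E3 in H2.
case: (Rle_lt_dec 1 z) => Hz1.
  apply: (Rle_trans _ _ _ H1).
  have : 1 <= z ^ 2 by nra.
  nra.
apply: (Rle_trans _ _ _ H2).
apply: Rmult_le_compat_l => //.
simpl; nra.
Qed.

Lemma E_kk S kk : (0 < m)%N -> #|S| = 4%N ->
  \big[Rplus/0]_w (cfg_weight P w * (ind (rainbow_K4_witness w S) * Iw S kk w)) <= T2 S kk.
Proof.
move=> Hm HS.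
rewrite T2E //.
apply: z_ineq.
- exact: E0_ge0.
- exact: pos_INR.
- apply: Rprod_ge0 => v _; rewrite /tk; apply: Rmult_le_pos; first exact: pos_INR.
  by apply: Rlt_le; apply: Rinv_0_lt_compat; apply: lt_0_INR; apply/ltP.
- rewrite -E_Iw; apply: Rsum_le => w _; apply: Rmult_le_compat_l; first exact: wt_ge0.
  have := Iw_ge0 S kk w; have := ind_le1 (rainbow_K4_witness w S); nra.
- by rewrite -M3E; apply: E_wit_kk.
Qed.

Lemma E_wit S : (0 < m)%N -> #|S| = 4%N ->
  \big[Rplus/0]_(w : config n m) (cfg_weight P w * ind (rainbow_K4_witness w S)) <= qq ^ 4.
Proof.
move=> Hm HS.
rewrite -(sum_T2 HS).
apply: (Rle_trans _ (\big[Rplus/0]_(w : config n m) \big[Rplus/0]_kk (cfg_weight P w * (ind (rainbow_K4_witness w S) * Iw S kk w)))).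
  apply: Req_le; apply: eq_bigr => w _.
  rewrite -big_distrr /= -big_distrr /= sum_kk_one; lra.
rewrite exchange_big /=; apply: Rsum_le => kk _; exact: E_kk.
Qed.

Lemma prodS_sq S kk : (0 < m)%N -> #|S| = 4%N ->
  \big[Rmult/1]_(v in S) (INR (kk v) ^ 2 / INR m) = INR m ^ 4 * pS S kk ^ 2.
Proof.
move=> Hm HS.
have Hm' : INR m <> 0 by apply: not_0_INR; lia.
rewrite (eq_bigr (fun v => INR m * tk (kk v) ^ 2)); last by move=> v _; rewrite /tk; field.
rewrite big_split Rprod_const (Rprod_pow S (fun v => tk (kk v))).
by congr (_ ^ _ * _); rewrite -HS.
Qed.

Lemma Iw_match S kk w (sm : nat -> bool) :
  Iw S kk w * ind [forall v in S, sm #|w v|] <= ind [forall v in S, sm (kk v)] * Iw S kk w.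
Proof.
have H0 := Iw_ge0 S kk w.
case: (boolP [forall v in S, sm (kk v)]) => [_ | /forall_inPn [v vS nsv]].
  have := ind_le1 [forall v in S, sm #|w v|]; rewrite /ind; nra.
rewrite {2}/ind Rmult_0_l.
case: (boolP (#|w v| == kk v)) => [/eqP E | ne].
  have -> : [forall v in S, sm #|w v|] = false.
    by apply/negbTE/forall_inPn; exists v => //; rewrite E.
  rewrite /ind; lra.
have -> : Iw S kk w = 0.
  by rewrite /Iw (bigD1 v) //= /Ik vS /ind (negbTE ne) Rmult_0_l.
lra.
Qed.

Lemma T2_ge0 S kk : 0 <= T2 S kk.
Proof.
apply: Rprod_ge0 => v _; case: ifP => _; last exact: ind_ge0.
apply: Rmult_le_pos; first by apply: P_ge0; rewrite -ltnS.
apply: Rmult_le_pos; first by apply: pow_le; apply: pos_INR.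
case: (Req_dec (INR m) 0) => [E|E]; first by rewrite E Rinv_0; lra.
by apply: Rlt_le; apply: Rinv_0_lt_compat; have := pos_INR m; lra.
Qed.

Lemma E_wit_small S (sm : nat -> bool) e : (0 < m)%N -> #|S| = 4%N -> 0 <= e ->
  (forall k, (k <= m)%N -> sm k -> INR k ^ 2 / INR m <= e ^ 2) ->
  \big[Rplus/0]_(w : config n m)
     (cfg_weight P w * (ind (rainbow_K4_witness w S) * ind [forall v in S, sm #|w v|]))
  <= e ^ 4 * qq ^ 4.
Proof.
move=> Hm HS He Hsm.
rewrite -(sum_T2 HS) big_distrr.
have step : \big[Rplus/0]_(w : config n m)
     (cfg_weight P w * (ind (rainbow_K4_witness w S) * ind [forall v in S, sm #|w v|])) <= (\big[Rplus/0]_(w : config n m) \big[Rplus/0]_(kk : {ffun 'I_n -> 'I_m.+1}) (cfg_weight P w *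
   (ind [forall v in S, sm (kk v)] * (ind (rainbow_K4_witness w S) * Iw S kk w)))).
  apply: Rsum_le => w _.
  rewrite -big_distrr.
  apply: Rmult_le_compat_l; first exact: wt_ge0.
  rewrite -[X in X <= _]Rmult_1_r -(sum_kk_one S w) big_distrr.
  apply: Rsum_le => kk _.
  have H1 := Iw_match S kk w sm; have H2 := ind_ge0 (rainbow_K4_witness w S).
  move: H1 H2.
  set a := ind (rainbow_K4_witness w S); set b := ind [forall v in S, sm #|w v|].
  set c := ind [forall v in S, sm (kk v)]; set d := Iw S kk w.
  move=> H1 H2; change (a * b * d <= c * (a * d)); nra.
apply: (Rle_trans _ _ _ step).
rewrite exchange_big /=; apply: Rsum_le => kk _.
rewrite (eq_bigr (fun w : config n m => ind [forall v in S, sm (kk v)] *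
   (cfg_weight P w * (ind (rainbow_K4_witness w S) * Iw S kk w)))); last first.
move=> w _; rewrite -!Rmult_assoc (Rmult_comm (cfg_weight P w)) //.
rewrite Rsum_mull.
case: (boolP [forall v in S, sm (kk v)]) => [/forall_inP Hall|_]; last first.
  rewrite /ind Rmult_0_l; apply: Rmult_le_pos; [by have := pow_le e 4 He | exact: T2_ge0].
rewrite /ind Rmult_1_l.
apply: (Rle_trans _ _ _ (E_wit_kk kk Hm HS)).
rewrite M3E T2E //.
have Hp : 0 <= pS S kk.
  apply: Rprod_ge0 => v _; rewrite /tk; apply: Rmult_le_pos; first exact: pos_INR.
  by apply: Rlt_le; apply: Rinv_0_lt_compat; apply: lt_0_INR; apply/ltP.
have HE0 := E0_ge0 S kk.
have Hz2 : INR m ^ 4 * pS S kk ^ 2 <= (e ^ 2) ^ 4.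
  rewrite -prodS_sq // -[X in _ <= X]Rmult_1_r.
  have -> : (e ^ 2) ^ 4 * 1 = \big[Rmult/1]_(v in S) (e ^ 2).
    by rewrite Rprod_const (_ : #|[pred v | v \in S]| = 4%N) ?HS //; lra.
  apply: Rprod_le => v vS; split.
    apply: Rmult_le_pos; first by apply: pow_le; apply: pos_INR.
    by apply: Rlt_le; apply: Rinv_0_lt_compat; apply: lt_0_INR; apply/ltP.
  by apply: Hsm; [rewrite -ltnS | apply: Hall].
set z := INR m ^ 2 * pS S kk.
have Hm0 : 0 <= INR m := pos_INR m.
have Hz : 0 <= z by apply: Rmult_le_pos => //; apply: pow_le.
have Ez2 : INR m ^ 4 * pS S kk ^ 2 = z ^ 2 by rewrite /z; ring.
have Ez3 : INR m ^ 6 * (E0 S kk * pS S kk ^ 3) = E0 S kk * z ^ 3 by rewrite /z; ring.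
rewrite Ez3 Ez2; rewrite Ez2 in Hz2.
have He4 : 0 <= e ^ 4 by apply: pow_le.
have Hze : z <= e ^ 4.
  have : z ^ 2 <= (e ^ 4) ^ 2 by rewrite -pow_mult; simpl in Hz2 |- *; nra.
  simpl; nra.
have : z ^ 3 <= e ^ 4 * z ^ 2.
  have -> : z ^ 3 = z * z ^ 2 by ring.
  apply: Rmult_le_compat_r => //; apply: pow_le => //.
nra.
Qed.

End Expect.

Section Final.
Variables (n m : nat) (P : nat -> R).
Hypothesis HP : is_distr m P.

Lemma wit_m_pos (w : config n m) S : rainbow_K4_witness w S -> (0 < m)%N.
Proof.
case/and3P => /eqP HS _ /existsP[g _].
have : (0 < #|S|)%N by rewrite HS.
case/card_gt0P => u _.
by case: (g (u, u)) => x Hx; apply: leq_ltn_trans Hx.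
Qed.

Lemma wit_card (w : config n m) S : rainbow_K4_witness w S -> #|S| = 4%N.
Proof. by case/and3P => /eqP. Qed.

Lemma pow4_ge0 x : 0 <= x ^ 4.
Proof. have -> : x ^ 4 = (x ^ 2) ^ 2 by ring. apply: pow2_ge_0. Qed.

Lemma E_wit_all S :
  \big[Rplus/0]_(w : config n m) (cfg_weight P w * ind (rainbow_K4_witness w S))
  <= ind (#|S| == 4%N) * qq m P ^ 4.
Proof.
case: (boolP (#|S| == 4%N)) => [/eqP HS | HS].
  rewrite /ind Rmult_1_l.
  case: (posnP m) => [Hm0 | Hm]; last exact: E_wit.
  apply: (Rle_trans _ 0); last exact: pow4_ge0.
  apply: Req_le; apply: big1 => w _.
  case: (boolP (rainbow_K4_witness w S)) => H.
    by exfalso; have := wit_m_pos H; rewrite Hm0.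
  by rewrite /ind Rmult_0_r.
rewrite /ind Rmult_0_l; apply: Req_le; apply: big1 => w _.
case: (boolP (rainbow_K4_witness w S)) => H; last by rewrite Rmult_0_r.
by move: HS; rewrite (wit_card H).
Qed.

Lemma ER_le_gen c : (forall S, \big[Rplus/0]_(w : config n m) (cfg_weight P w * ind (rainbow_K4_witness w S))
  <= ind (#|S| == 4%N) * c) -> E_num_rainbow_K4 n m P <= INR 'C(n, 4) * c.
Proof.
move=> HS.
rewrite /E_num_rainbow_K4 /num_rainbow_K4.
rewrite (eq_bigr (fun w : config n m => \big[Rplus/0]_(S : {set 'I_n}) (cfg_weight P w * ind (rainbow_K4_witness w S)))); last first.
  move=> w _; rewrite -big_distrr /=; congr (_ * _).
  rewrite (_ : #|[set S | rainbow_K4_witness w S]| = #|[pred S | rainbow_K4_witness w S]|).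
    exact: INR_card.
  by apply: eq_card => S; rewrite inE.
rewrite exchange_big /=.
apply: (Rle_trans _ (\big[Rplus/0]_(S : {set 'I_n}) (ind (#|S| == 4%N) * c))).
  apply: Rsum_le => S _; exact: HS.
rewrite -big_distrl /= -INR_card.
have -> : #|[pred S : {set 'I_n} | #|S| == 4%N]| = 'C(n, 4).
  by rewrite -[in RHS](card_ord n) -card_draws cardsE.
lra.
Qed.

Lemma ER_le : E_num_rainbow_K4 n m P <= INR 'C(n, 4) * qq m P ^ 4.
Proof. apply: ER_le_gen; exact: E_wit_all. Qed.

Lemma ER_m0 : m = 0%N -> E_num_rainbow_K4 n m P <= 0.
Proof.
move=> Hm0; rewrite -(Rmult_0_r (INR 'C(n, 4))); apply: ER_le_gen => S.
rewrite Rmult_0_r; apply: Req_le; apply: big1 => w _.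
case: (boolP (rainbow_K4_witness w S)) => H; last by rewrite /ind Rmult_0_r.
by exfalso; have := wit_m_pos H; rewrite Hm0.
Qed.

Lemma C4_le : INR 'C(n, 4) * 24 <= INR n ^ 4.
Proof.
have H : ('C(n, 4) * 24 <= n ^ 4)%N.
  have -> : 24%N = 4`! by [].
  rewrite bin_ffact !ffactnS ffactn0.
  have h1 : (n.-1 <= n)%N by apply: leq_pred.
  have h2 : (n.-1.-1 <= n)%N by apply: leq_trans (leq_pred _) h1.
  have h3 : (n.-1.-1.-1 <= n)%N by apply: leq_trans (leq_pred _) h2.
  have -> : (n ^ 4 = n * (n * (n * (n * 1))))%N by rewrite !expnS expn0.
  rewrite muln1; apply: leq_mul => //; apply: leq_mul => //; apply: leq_mul => //.
  by rewrite muln1.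
have := le_INR _ _ (elimT leP H); rewrite INR_muln INR_expn.
by rewrite (_ : INR 24 = 24) //; simpl; lra.
Qed.

Lemma EY2E : (0 < m)%N -> EY2 n m P = INR n * qq m P.
Proof.
move=> Hm.
have Hm' : 0 < INR m by apply: lt_0_INR; apply/ltP.
rewrite /EY2 /qq big_mkord big_distrr; apply: eq_bigr => k _.
rewrite /Yval.
have Hx : 0 <= INR n / INR m by apply: Rmult_le_pos; [exact: pos_INR | apply: Rlt_le; apply: Rinv_0_lt_compat].
have -> : (sqrt (INR n / INR m) * INR k) ^ 2 = (sqrt (INR n / INR m)) ^ 2 * INR k ^ 2 by ring.
rewrite pow2_sqrt //.
change (P k * (INR n / INR m * INR k ^ 2) = INR n * (P k * (INR k ^ 2 / INR m))).
field; lra.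
Qed.

Lemma EY2_ge0 : 0 <= EY2 n m P.
Proof.
rewrite /EY2 big_mkord; apply: Rsum_ge0 => k _.
apply: Rmult_le_pos; last exact: pow2_ge_0.
by case: HP => H _; apply: H; rewrite -ltnS.
Qed.

Lemma part1 : E_num_rainbow_K4 n m P <= EY2 n m P ^ 4 / INR 4`!.
Proof.
have -> : INR 4`! = 24 by rewrite /=; lra.
case: (posnP m) => [Hm0|Hm].
  apply: (Rle_trans _ _ _ (ER_m0 Hm0)).
  have := pow4_ge0 (EY2 n m P); lra.
apply: (Rle_trans _ _ _ ER_le).
rewrite EY2E //.
have := C4_le; have := pow4_ge0 (qq m P).
have -> : (INR n * qq m P) ^ 4 = INR n ^ 4 * qq m P ^ 4 by ring.
set a := qq m P ^ 4; set c := INR 'C(n, 4); set b := INR n ^ 4.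
move=> Ha Hc. apply: (Rmult_le_reg_r 24); first lra.
have -> : b * a / 24 * 24 = b * a by field.
nra.
Qed.


Definition Phas : R := \big[Rplus/0]_(w : config n m) (if has_rainbow_K4 w then cfg_weight P w else 0).

Lemma Pno_E : Pr_no_rainbow_K4 n m P = 1 - Phas.
Proof.
rewrite -(sum_wt n HP) /Phas /Pr_no_rainbow_K4.
apply: (Rplus_eq_reg_r (\big[Rplus/0]_(w : config n m) (if has_rainbow_K4 w then cfg_weight P w else 0))).
rewrite -big_split /=.
have -> : forall a b : R, a - b + b = a by move=> a b; ring.
by apply: eq_bigr => w _; case: (has_rainbow_K4 w); lra.
Qed.

Lemma Phas_ge0 : 0 <= Phas.
Proof. apply: Rsum_ge0 => w _; case: (has_rainbow_K4 w); [exact: wt_ge0 | lra]. Qed.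

Section Eps.
Variable t : R.
Definition bigk (k : nat) : bool := if Rle_dec t (Yval n m k) then true else false.

Lemma E_big v : \big[Rplus/0]_(w : config n m) (cfg_weight P w * ind (bigk #|w v|)) = PrY_ge n m P t.
Proof.
transitivity (\big[Rplus/0]_(w : config n m) (cfg_weight P w *
   \big[Rmult/1]_u (if u == v then ind (bigk #|w u|) else 1))).
  apply: eq_bigr => w _; congr (_ * _).
  rewrite (bigD1 v) //= eqxx big1 ?Rmult_1_r // => u /negbTE ->; done.
rewrite (EXP P (fun u A => if u == v then ind (bigk #|A|) else 1)) (bigD1 v) //=.
rewrite [X in _ * X](_ : _ = 1); last first.
  apply: big1 => u /negbTE uv.
  rewrite -[RHS](sum_fw HP); apply: eq_bigr => A _; rewrite uv; lra.
rewrite Rmult_1_r.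
rewrite (eq_bigr (fun A : {set 'I_m} => fw P A * (fun k => ind (bigk k)) #|A|)); last first.
  by move=> A _; rewrite eqxx.
rewrite (sum_card_fun m P (fun k => ind (bigk k))) /PrY_ge big_mkord; apply: eq_bigr => k _.
by rewrite /bigk /ind; case: (Rle_dec t (Yval n m k)) => H /=; lra.
Qed.

Lemma small_cond eps k : t = eps * sqrt (INR n) -> 0 < eps -> (0 < n)%N -> (0 < m)%N ->
  ~~ bigk k -> INR k ^ 2 / INR m <= eps ^ 2.
Proof.
move=> Ht He Hn Hm; rewrite /bigk; case: Rle_dec => // Hlt _.
have Hn' : 0 < INR n by apply: lt_0_INR; apply/ltP.
have Hm' : 0 < INR m by apply: lt_0_INR; apply/ltP.
have Hx : 0 <= INR n / INR m by apply: Rmult_le_pos; [lra | apply: Rlt_le; apply: Rinv_0_lt_compat].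
move/Rnot_le_lt: Hlt; rewrite /Yval Ht => Hlt.
have H0 : 0 <= sqrt (INR n / INR m) * INR k by apply: Rmult_le_pos; [apply: sqrt_pos | apply: pos_INR].
have H2 : (sqrt (INR n / INR m) * INR k) ^ 2 < (eps * sqrt (INR n)) ^ 2.
  by simpl; nra.
have E1 : (sqrt (INR n / INR m) * INR k) ^ 2 = INR n / INR m * INR k ^ 2.
  by rewrite Rpow_mult_distr pow2_sqrt.
have E2 : (eps * sqrt (INR n)) ^ 2 = eps ^ 2 * INR n.
  by rewrite Rpow_mult_distr pow2_sqrt //; lra.
rewrite E1 E2 in H2.
apply: Rlt_le.
apply: (Rmult_lt_reg_l (INR n)) => //.
have -> : INR n * (INR k ^ 2 / INR m) = INR n / INR m * INR k ^ 2 by field; lra.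
lra.
Qed.

End Eps.

Lemma sum_ind4 c : \big[Rplus/0]_(S : {set 'I_n}) (ind (#|S| == 4%N) * c) = INR 'C(n, 4) * c.
Proof.
rewrite -big_distrl /= -INR_card.
have -> : #|[pred S : {set 'I_n} | #|S| == 4%N]| = 'C(n, 4).
  by rewrite -[in RHS](card_ord n) -card_draws cardsE.
done.
Qed.

Lemma Phas_le eps : 0 < eps ->
  Phas <= INR n * PrY_ge n m P (eps * sqrt (INR n)) + eps ^ 4 * (EY2 n m P ^ 4 / 24).
Proof.
move=> He.
set t := eps * sqrt (INR n).
pose A (w : config n m) := \big[Rplus/0]_v (cfg_weight P w * ind (bigk t #|w v|)).
pose B (w : config n m) := \big[Rplus/0]_(S : {set 'I_n})
    (cfg_weight P w * (ind (rainbow_K4_witness w S) * ind [forall v in S, ~~ bigk t #|w v|])).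
have A0 : forall w, 0 <= A w.
  move=> w; apply: Rsum_ge0 => v _; apply: Rmult_le_pos; [exact: wt_ge0 | exact: ind_ge0].
have B0 : forall w, 0 <= B w.
  move=> w; apply: Rsum_ge0 => S _; apply: Rmult_le_pos; first exact: wt_ge0.
  apply: Rmult_le_pos; exact: ind_ge0.
have PW : forall w, (if has_rainbow_K4 w then cfg_weight P w else 0) <= A w + B w.
  move=> w; case: (boolP (has_rainbow_K4 w)) => [/existsP [S HS] | _]; last first.
    by have := A0 w; have := B0 w; lra.
  case: (boolP [forall v in S, ~~ bigk t #|w v|]) => [Hall | /forall_inPn [v vS nb]].
    have : cfg_weight P w <= B w.
      apply: Rle_trans (Rsum_ge_term (P := fun _ => true) (i0 := S) _ _) => //.
        by rewrite HS Hall /ind; lra.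
      move=> S' _; apply: Rmult_le_pos; first exact: wt_ge0.
      apply: Rmult_le_pos; exact: ind_ge0.
    by have := A0 w; lra.
  have : cfg_weight P w <= A w.
    apply: Rle_trans (Rsum_ge_term (P := fun _ => true) (i0 := v) _ _) => //.
      by rewrite negbK in nb; rewrite nb /ind; lra.
    move=> u _; apply: Rmult_le_pos; [exact: wt_ge0 | exact: ind_ge0].
  by have := B0 w; lra.
apply: (Rle_trans _ (\big[Rplus/0]_(w : config n m) (A w + B w))).
  by apply: Rsum_le => w _; apply: PW.
rewrite big_split /=.
apply: Rplus_le_compat.
  rewrite /A exchange_big.
  rewrite (eq_bigr (fun v => PrY_ge n m P t)); last by move=> v _; apply: E_big.
  by rewrite Rsum_const card_ord; lra.
rewrite /B exchange_big.
case: (posnP m) => [Hm0|Hm].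
  apply: (Rle_trans _ 0).
    apply: Req_le; apply: big1 => S _; apply: big1 => w _.
    case: (boolP (rainbow_K4_witness w S)) => H; last by rewrite /ind; lra.
    by exfalso; have := wit_m_pos H; rewrite Hm0.
  apply: Rmult_le_pos; first exact: (pow_le eps 4 (Rlt_le _ _ He)).
  have := pow4_ge0 (EY2 n m P); lra.
apply: (Rle_trans _ (\big[Rplus/0]_(S : {set 'I_n}) (ind (#|S| == 4%N) * (eps ^ 4 * qq m P ^ 4)))).
  apply: Rsum_le => S _.
  case: (boolP (#|S| == 4%N)) => [/eqP HS | HS].
    rewrite /ind Rmult_1_l.
    apply: (@E_wit_small n m P HP S (fun k => ~~ bigk t k) eps Hm HS); first lra.
    move=> k Hk; apply: (small_cond (eps := eps)) => //.
    have : (#|S| <= n)%N by rewrite -[X in (_ <= X)%N](card_ord n) max_card.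
    by rewrite HS; lia.
  rewrite /ind Rmult_0_l; apply: Req_le; apply: big1 => w _.
  case: (boolP (rainbow_K4_witness w S)) => H; last by rewrite /ind; lra.
  by move: HS; rewrite (wit_card H).
rewrite sum_ind4 EY2E //.
change (INR 'C(n,4) * (eps^4 * qq m P^4) <= eps^4 * ((INR n * qq m P)^4 / 24)).
have := C4_le; have := pow4_ge0 (qq m P); have : 0 <= eps ^ 4 by apply: pow_le; lra.
have -> : (INR n * qq m P) ^ 4 = INR n ^ 4 * qq m P ^ 4 by ring.
set a := qq m P ^ 4; set c := INR 'C(n, 4); set b := INR n ^ 4; set e4 := eps ^ 4.
move=> He4 Ha Hc.
apply: (Rmult_le_reg_r 24); first lra.
have -> : e4 * (b * a / 24) * 24 = e4 * (b * a) by field.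
have Hea : 0 <= e4 * a by apply: Rmult_le_pos.
have H := Rmult_le_compat_l _ _ _ Hea Hc.
apply: (Rle_trans _ (e4 * a * (c * 24))); first by right; ring.
by apply: (Rle_trans _ _ _ H); right; ring.
Qed.

End Final.


Lemma eps4_le e : 0 < e -> e < 1 -> e ^ 4 <= e.
Proof.
move=> H0 H1.
have h2 : e * e <= 1 by nra.
have h3 : e * e * e <= 1 by nra.
simpl; nra.
Qed.

Unset Implicit Arguments.
Set Strict Implicit.

Theorem mainTheorem16
  (m : nat -> nat) (P : nat -> nat -> R)
  (HP : forall n, is_distr (m n) (P n))
  (Hm : forall M : nat, exists N : nat, forall n : nat, (N <= n)%N -> (M <= m n)%N)
  (HY : exists C : R, forall n : nat, (EY2 n (m n) (P n) <= C)) :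
  (forall n : nat,
     (E_num_rainbow_K4 n (m n) (P n) <= (EY2 n (m n) (P n)) ^ 4 / INR (4`!))) /\
  (exists C : R, forall n : nat, (E_num_rainbow_K4 n (m n) (P n) <= C)) /\
  (forall eps : nat -> R,
     (forall n, (0 < eps n)) ->
     Un_cv eps 0 ->
     Un_cv (fun n => INR n * PrY_ge n (m n) (P n) (eps n * sqrt (INR n))) 0 ->
     Un_cv (fun n => Pr_no_rainbow_K4 n (m n) (P n)) 1).
Proof.
have P1 : forall n : nat,
     (E_num_rainbow_K4 n (m n) (P n) <= (EY2 n (m n) (P n)) ^ 4 / INR (4`!)).
  move=> n; have H := part1 n (HP n); exact H.
case: HY => C0 HC.
set C := Rmax C0 0.
have HC0 : 0 <= C by apply: Rmax_r.
have HYb : forall n, EY2 n (m n) (P n) ^ 4 <= C ^ 4.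
  move=> n; apply: pow_incr; split; first exact: (EY2_ge0 n (HP n)).
  apply: Rle_trans (HC n) _; apply: Rmax_l.
have H24 : INR 4`! = 24 by rewrite /=; lra.
split => //; split.
  exists (C ^ 4 / INR 4`!) => n; apply: Rle_trans (P1 n) _.
  rewrite H24; have := HYb n; lra.
move=> eps Heps Hcv Ha.
set K := C ^ 4 / 24.
have HK : 0 <= K by rewrite /K; have := pow_le C 4 HC0; lra.
have Bd : forall n, 0 <= Phas n (m n) (P n) <= INR n * PrY_ge n (m n) (P n) (eps n * sqrt (INR n)) + eps n ^ 4 * K.
  move=> n; split; first exact: (Phas_ge0 n (HP n)).
  apply: Rle_trans (Phas_le n (HP n) (Heps n)) _.
  apply: Rplus_le_compat_l; apply: Rmult_le_compat_l; first by apply: pow_le; apply: Rlt_le.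
  rewrite /K; have := HYb n; lra.
move=> e He.
have He2 : 0 < e / 2 by lra.
case: (Ha _ He2) => N1 HN1.
set d := Rmin 1 (e / (2 * (K + 1))).
have Hd : 0 < d by apply: Rmin_pos; [lra | apply: Rdiv_lt_0_compat; lra].
case: (Hcv _ Hd) => N2 HN2.
exists (Nat.max N1 N2) => n Hn.
have Hn1 : (n >= N1)%coq_nat by lia.
have Hn2 : (n >= N2)%coq_nat by lia.
have := HN1 n Hn1; have := HN2 n Hn2; rewrite /R_dist !Rminus_0_r.
rewrite (Pno_E n (HP n)).
have := Bd n; have := Heps n.
set a := INR n * _; set p := Phas _ _ _; set x := eps n.
move=> Hx [Hp0 Hp] Hxd Ha1.
have hd1 : d <= 1 := Rmin_l _ _.
have hd2 : d <= e / (2 * (K + 1)) := Rmin_r _ _.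
have Hxa : Rabs x = x by rewrite Rabs_right; lra.
rewrite Hxa in Hxd.
have Hx1 : x < 1 by lra.
have Hxd' : x < e / (2 * (K + 1)) by lra.
have Hx4 := eps4_le Hx Hx1.
have HxK : x ^ 4 * K <= x * K by apply: Rmult_le_compat_r.
have HxK2 : x * K < e / 2.
  have : x * (K + 1) < e / 2.
    have -> : e / 2 = e / (2 * (K + 1)) * (K + 1) by field; lra.
    by apply: Rmult_lt_compat_r; lra.
  nra.
have Haa : a <= Rabs a by apply: Rle_abs.
rewrite (_ : 1 - p - 1 = - p); last ring.
rewrite Rabs_Ropp Rabs_right; lra.
Qed.
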